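(* Let $s$ be a Sturmian word of type $a$ having a factorization $s=U_1U_2\cdots U_n\cdots$ where each $U_i$ ($i\ge1$) is a non-empty prefix of $s$ and $r_s(U_i)=r_s(U_j)$ for all $i,j\ge1$. Then at least one of the following holds: (i) every $U_i$, $i\ge1$, ends in the letter $a$; (ii) for every $i\ge1$, $U_ia$ is a prefix of $s$.
   Context: A Sturmian word is an infinite word $s\in\{a,b\}^{\omega}$ that is aperiodic (not ultimately periodic) and balanced: for all factors $u,v$ of $s$ with $|u|=|v|$ one has $||u|_x-|v|_x|\le 1$ for $x\in\{a,b\}$, where $|u|_x$ is the number of occurrences of $x$ in $u$. A Sturmian word contains exactly one of the factors $aa$, $bb$; it is of type $a$ if it does not contain the factor $bb$ (and of type $b$ if it does not contain $aa$). A non-empty factor $w$ of $s$ is rich in the letter $z\in\{a,b\}$ if there is a factor $v$ of $s$ with $|v|=|w|$ and $|w|_z>|v|_z$; every non-empty factor of a Sturmian word is rich in exactly one letter, and $r_s(w)\in\{a,b\}$ denotes that letter. *)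

(* Defs.v *)
From Stdlib Require Import Arith List Lia ClassicalEpsilon.
Import ListNotations.

Inductive letter : Type := a | b.

Definition letter_eqb (x y : letter) : bool :=
  match x, y with a, a => true | b, b => true | _, _ => false end.

Definition word := nat -> letter.

Definition fac (s : word) (i n : nat) : list letter := map (fun k => s (i + k)) (seq 0 n).

Definition is_factor (s : word) (w : list letter) : Prop := exists i, w = fac s i (length w).

Definition is_prefix (s : word) (w : list letter) : Prop := w = fac s 0 (length w).

Definition cnt (x : letter) (w : list letter) : nat := length (filter (letter_eqb x) w).

Definition ult_periodic (s : word) : Prop :=
  exists p N, 0 < p /\ forall n, N <= n -> s (n + p) = s n.

Definition balanced (s : word) : Prop :=
  forall u v, is_factor s u -> is_factor s v -> length u = length v ->
    forall x, cnt x u <= cnt x v + 1 /\ cnt x v <= cnt x u + 1.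

Definition sturmian (s : word) : Prop := ~ ult_periodic s /\ balanced s.

Definition type_a (s : word) : Prop := ~ is_factor s [b; b].

Definition rich (s : word) (z : letter) (w : list letter) : Prop :=
  w <> [] /\ is_factor s w /\
  exists v, is_factor s v /\ length v = length w /\ cnt z v < cnt z w.

(* r_s(w): the letter in which w is rich (exactly one for Sturmian s, nonempty factor w) *)
Definition r_s (s : word) (w : list letter) : letter :=
  if excluded_middle_informative (rich s a w) then a else b.

Fixpoint upos (U : nat -> list letter) (k : nat) : nat :=
  match k with 0 => 0 | S k' => upos U k' + length (U k') end.

Definition factorization (s : word) (U : nat -> list letter) : Prop :=
  forall k, U k <> [] /\ U k = fac s (upos U k) (length (U k)).

(* Main.v *)
Require Import Defs.
From Stdlib Require Import List.
Import ListNotations.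
From Stdlib Require Import Arith Lia ClassicalEpsilon.

Lemma map_seq_shift (A : Type) (m : nat) : forall n (f : nat -> A),
  map f (seq n m) = map (fun k => f (n + k)) (seq 0 m).
Proof.
  induction m as [|m IH]; intros n f; simpl; [reflexivity|].
  rewrite Nat.add_0_r. f_equal.
  rewrite (IH (S n) f), (IH 1 (fun k => f (n + k))).
  apply map_ext. intros k. f_equal. lia.
Qed.

Lemma fac_length s i n : length (fac s i n) = n.
Proof. unfold fac. rewrite length_map, length_seq. reflexivity. Qed.

Lemma fac_add s i n m : fac s i (n + m) = fac s i n ++ fac s (i + n) m.
Proof.
  unfold fac. rewrite seq_app, map_app. f_equal. simpl.
  rewrite map_seq_shift. apply map_ext. intros k. f_equal. lia.
Qed.

Lemma fac_nth s i n e : e < n -> nth e (fac s i n) a = s (i + e).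
Proof.
  intros He. unfold fac.
  rewrite (nth_indep _ a (s (i + 0))) by (rewrite length_map, length_seq; exact He).
  rewrite (map_nth (fun k => s (i + k))). rewrite seq_nth by exact He. reflexivity.
Qed.

Lemma fac_agree s p q d : (forall e, e < d -> s (p + e) = s (q + e)) -> fac s p d = fac s q d.
Proof.
  intros H. unfold fac. apply map_ext_in. intros k Hk. apply in_seq in Hk. apply H. lia.
Qed.

Lemma cnt_app x l1 l2 : cnt x (l1 ++ l2) = cnt x l1 + cnt x l2.
Proof. unfold cnt. rewrite filter_app, length_app. reflexivity. Qed.

Definition c (s : word) i n := cnt a (fac s i n).

Lemma c_add s i n m : c s i (n + m) = c s i n + c s (i + n) m.
Proof. unfold c. rewrite fac_add, cnt_app. reflexivity. Qed.

Lemma c_one s i : c s i 1 = (if s i then 1 else 0).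
Proof. unfold c, fac. simpl. rewrite Nat.add_0_r. destruct (s i); reflexivity. Qed.

Lemma fac_is_factor s i n : is_factor s (fac s i n).
Proof. exists i. rewrite fac_length. reflexivity. Qed.

Definition ltw (t u : nat -> letter) : Prop :=
  exists d, (forall e, e < d -> t e = u e) /\ t d = a /\ u d = b.

Lemma heavy_step s P n :
  (forall i, c s i n <= c s P n) -> ~ ltw (fun e => s (P + n + e)) (fun e => s (P + e)).
Proof.
  intros Hmax [d [Hag [H1 H2]]].
  pose proof (Hmax (P + d + 1)) as Hm.
  assert (E1 : c s P (n + (d + 1)) = c s P ((d + 1) + n)) by (f_equal; lia).
  rewrite (c_add s P n (d+1)), (c_add s P (d+1) n) in E1.
  rewrite (c_add s (P + n) d 1), (c_add s P d 1), !c_one in E1.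
  rewrite H1, H2 in E1. replace (P + (d + 1)) with (P + d + 1) in E1 by lia.
  assert (E2 : c s (P + n) d = c s P d).
  { unfold c. f_equal. apply fac_agree. intros e He. apply Hag. exact He. }
  lia.
Qed.

Lemma letter_dec (x y : letter) : {x = y} + {x <> y}.
Proof. decide equality. Defined.

Lemma first_diff (t u : nat -> letter) d :
  (forall e, e <= d -> t e = u e) \/
  exists e, e <= d /\ (forall e', e' < e -> t e' = u e') /\ t e <> u e.
Proof.
  induction d as [|d IH].
  - destruct (letter_dec (t 0) (u 0)) as [E|E].
    + left. intros e He. assert (e = 0) by lia. subst. exact E.
    + right. exists 0. split; [lia|]. split; [intros; lia|exact E].
  - destruct IH as [H|[e [He [H1 H2]]]].
    + destruct (letter_dec (t (S d)) (u (S d))) as [E|E].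
      * left. intros e He. destruct (Nat.eq_dec e (S d)) as [->|Hn]; [exact E|apply H; lia].
      * right. exists (S d). split; [lia|]. split; [intros; apply H; lia|exact E].
    + right. exists e. split; [lia|auto].
Qed.

Lemma ltw_chain (t1 t2 u : nat -> letter) :
  ~ ltw t2 t1 -> ~ ltw t1 u -> ~ ltw t2 u.
Proof.
  intros N21 N1u [d [Hag [H1 H2]]].
  destruct (first_diff t1 u d) as [H|[e [He [Hb Hne]]]].
  - apply N21. exists d. split; [intros e He; rewrite Hag by lia; symmetry; apply H; lia|].
    split; [exact H1|]. rewrite H by lia. exact H2.
  - destruct (t1 e) eqn:Et, (u e) eqn:Eu; try congruence.
    + apply N1u. exists e. auto.
    + assert (e < d).
      { destruct (Nat.eq_dec e d); [subst; congruence|lia]. }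
      apply N21. exists e. split.
      * intros e' He'. rewrite Hag by lia. symmetry. apply Hb. exact He'.
      * split; [rewrite Hag by lia; exact Eu|exact Et].
Qed.

(* The paper's U_1, U_2, ... are U 0, U 1, ... here. *)
Theorem mainTheorem5 (s : word) (U : nat -> list letter) :
  sturmian s -> type_a s ->
  factorization s U ->
  (forall i, is_prefix s (U i)) ->
  (forall i j, r_s s (U i) = r_s s (U j)) ->
  (forall i, last (U i) a = a) \/ (forall i, is_prefix s (U i ++ [a])).
Proof.
  intros Hst Hta Hfac Hpre Hr.
  assert (F1 : forall k e, e < length (U k) -> s (upos U k + e) = s e).
  { intros k e He. destruct (Hfac k) as [_ H]. pose proof (Hpre k) as P. unfold is_prefix in P.
    assert (A1 := fac_nth s (upos U k) (length (U k)) e He). rewrite <- H in A1.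
    assert (A2 := fac_nth s 0 (length (U k)) e He). rewrite <- P in A2. simpl in A2. congruence. }
  assert (F2 : forall k, 0 < length (U k)).
  { intros k. destruct (Hfac k) as [Hne _]. destruct (U k); simpl; [congruence|lia]. }
  assert (F3 : forall k, s (upos U (S k)) = s 0).
  { intros k. pose proof (F1 (S k) 0 (F2 (S k))) as H. rewrite Nat.add_0_r in H. exact H. }
  destruct (s 0) eqn:Hs0.
  -
    right. intros j. unfold is_prefix. rewrite length_app. simpl length. rewrite fac_add.
    rewrite <- (Hpre j). f_equal. unfold fac. simpl. rewrite !Nat.add_0_r.
    destruct (s (length (U j))) eqn:Es; [reflexivity|exfalso].
    destruct (letter_dec (r_s s (U j)) a) as [Hra|Hra].
    +
      assert (Rich : forall k, rich s a (U k)).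
      { intros k. pose proof (Hr k j) as E. rewrite Hra in E. unfold r_s in E.
        destruct (excluded_middle_informative (rich s a (U k))); [assumption|discriminate]. }
      assert (Max : forall k i, c s i (length (U k)) <= c s (upos U k) (length (U k))).
      { intros k i. destruct (Rich k) as [_ [_ [v [Hv [Hlv Hlt]]]]].
        destruct Hst as [_ Hbal].
        destruct (Hbal (fac s i (length (U k))) v (fac_is_factor s i _) Hv) with (x := a)
          as [B1 _].
        { rewrite fac_length. symmetry. exact Hlv. }
        destruct (Hfac k) as [_ H]. unfold c. rewrite <- H. lia. }
      assert (IH : forall k, ~ ltw (fun e => s (upos U k + e)) s).
      { induction k as [|k IHk].
        - intros [d [_ [H1 H2]]]. simpl in H1. congruence.
        - apply (ltw_chain (fun e => s (upos U k + e)) _ _); [|exact IHk].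
          exact (heavy_step s (upos U k) (length (U k)) (Max k)). }
      apply (IH j). exists (length (U j)). split; [|split].
      * intros e He. apply F1. exact He.
      * change (s (upos U (S j)) = a). rewrite F3. reflexivity.
      * exact Es.
    +
      assert (NR : ~ rich s a (U j)).
      { intros HR. apply Hra. unfold r_s.
        destruct (excluded_middle_informative (rich s a (U j))); [reflexivity|contradiction]. }
      apply NR. split; [exact (proj1 (Hfac j))|]. split; [exists 0; exact (Hpre j)|].
      exists (fac s 1 (length (U j))). split; [apply fac_is_factor|]. split; [apply fac_length|].
      assert (Hc : cnt a (U j) = c s 0 (length (U j))) by (unfold c; rewrite <- (Hpre j); reflexivity).
      rewrite Hc. fold (c s 1 (length (U j))).
      pose proof (c_add s 0 (length (U j)) 1) as E1.
      pose proof (c_add s 0 1 (length (U j))) as E2.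
      rewrite Nat.add_comm in E2. rewrite E2 in E1. rewrite !c_one in E1. simpl in E1.
      rewrite Hs0, Es in E1. lia.
  -
    left. intros i. destruct (Hfac i) as [Hne H].
    pose proof (F2 i) as Hl. destruct (length (U i)) as [|m'] eqn:Em; [lia|].
    rewrite H. replace (S m') with (m' + 1) by lia. rewrite fac_add.
    unfold fac at 2. simpl. rewrite last_last. rewrite Nat.add_0_r.
    destruct (s (upos U i + m')) eqn:Es; [reflexivity|exfalso].
    apply Hta. exists (upos U i + m'). unfold fac. simpl. rewrite Nat.add_0_r, Es.
    assert (upos U (S i) = upos U i + m' + 1) by (simpl; lia).
    rewrite <- H0, F3. reflexivity.
Qed.
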